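(* For every spine grammar $\mathcal G$ there is a normalized spine grammar $\mathcal G'$ with $T(\mathcal G')=T(\mathcal G)$.
   Context: sCFTG: $\mathcal G=(N,\Sigma,S,P)$ with disjoint ranked alphabets $N=N_0\cup N_1$ (nullary/unary nonterminals) and $\Sigma=\Sigma_0\cup\Sigma_2$ (no unary terminals), start $S\in N_0$, finite productions $n\to r$ with $n\in N_0$ and $r$ a tree with inner nodes in $\Sigma_2\cup N_1$ (rank 2 resp. 1) and leaves in $N_0\cup\Sigma_0$, or $n\to C$ with $n\in N_1$ and $C$ such a tree additionally containing exactly one leaf $\Box$. A step replaces an occurrence of $n\in N_0$ by $r$, or a subtree $n(t')$ with $n\in N_1$ by $C$ with $\Box$ replaced by $t'$. $T(\mathcal G)$ is the set of trees over $\Sigma$ derivable from $S$. Spine grammar: an sCFTG with a map $d:\Sigma_2\to\{1,2\}$ such that for every production $n\to C$ with $n\in N_1$ and every position $w$ on the path from the root of $C$ to $\Box$ with $C(w)\in\Sigma_2$, the path continues to child $d(C(w))$ of $w$. Normal form: every production has one of the forms (i) start: $n\to b(\alpha)$ or $n\to\alpha$ with $b\in N_1$, $\alpha\in\Sigma_0$; (ii) chain: $n\to b_1(b_2(\Box))$ with $b_1,b_2\in N_1$; (iii) terminal: $n\to\sigma(\Box,a)$ or $n\to\sigma(a,\Box)$ with $\sigma\in\Sigma_2$, $a\in N_0\setminus\{S\}$. For $n\in N_0$, the spinal trees $I_{\mathcal G}(n)$ are the trees $t$ (over $\Sigma_2$, leaves in $\Sigma_0\cup N_0$) obtained from $n$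 by one derivation step of $\mathcal G$ followed by any number of steps using only productions with left-hand side in $N_1$. $\mathcal G$ is normalized if it is in normal form and for every $n\in N_0$ no tree of $I_{\mathcal G}(n)$ contains $n$. *)

(* Defs.v *)
From mathcomp Require Import all_boot.
From Stdlib Require Import List Relations.
Set Implicit Arguments.
Unset Strict Implicit.
Unset Printing Implicit Defensive.

(* Disjointness of the alphabets is given by the separate types. *)
Inductive tree (N0 N1 S0 S2 : Type) : Type :=
| tN0 : N0 -> tree N0 N1 S0 S2
| tS0 : S0 -> tree N0 N1 S0 S2
| tN1 : N1 -> tree N0 N1 S0 S2 -> tree N0 N1 S0 S2
| tS2 : S2 -> tree N0 N1 S0 S2 -> tree N0 N1 S0 S2 -> tree N0 N1 S0 S2
| tBox : tree N0 N1 S0 S2.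
Arguments tN0 {N0 N1 S0 S2}.
Arguments tS0 {N0 N1 S0 S2}.
Arguments tN1 {N0 N1 S0 S2}.
Arguments tS2 {N0 N1 S0 S2}.
Arguments tBox {N0 N1 S0 S2}.

Inductive ttree (S0 S2 : Type) : Type :=
| TLeaf : S0 -> ttree S0 S2
| TBin : S2 -> ttree S0 S2 -> ttree S0 S2 -> ttree S0 S2.
Arguments TLeaf {S0 S2}.
Arguments TBin {S0 S2}.

Section Grammars.
Variables (N0 N1 S0 S2 : Type).
Notation tr := (tree N0 N1 S0 S2).

Fixpoint emb (u : ttree S0 S2) : tr :=
  match u with
  | TLeaf a => tS0 a
  | TBin s l r => tS2 s (emb l) (emb r)
  end.

Fixpoint nbox (t : tr) : nat :=
  match t with
  | tBox => 1
  | tN0 _ | tS0 _ => 0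
  | tN1 _ t => nbox t
  | tS2 _ l r => nbox l + nbox r
  end.

Fixpoint fill (C t : tr) : tr :=
  match C with
  | tBox => t
  | tN0 n => tN0 n
  | tS0 a => tS0 a
  | tN1 b C' => tN1 b (fill C' t)
  | tS2 s l r => tS2 s (fill l t) (fill r t)
  end.

Record sCFTG := {
  start : N0;
  prods0 : list (N0 * tr);
  prods1 : list (N1 * tr) }.

Definition wf_sCFTG (G : sCFTG) : Prop :=
  (forall n r, In (n, r) (prods0 G) -> nbox r = 0) /\
  (forall n C, In (n, C) (prods1 G) -> nbox C = 1).

Inductive step_gen (G : sCFTG) (only1 : bool) : tr -> tr -> Prop :=
| st_N0 : forall n r, only1 = false -> In (n, r) (prods0 G) ->
    step_gen G only1 (tN0 n) r
| st_N1 : forall n C t, In (n, C) (prods1 G) ->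
    step_gen G only1 (tN1 n t) (fill C t)
| st_un : forall b t t', step_gen G only1 t t' ->
    step_gen G only1 (tN1 b t) (tN1 b t')
| st_binl : forall s l l' r, step_gen G only1 l l' ->
    step_gen G only1 (tS2 s l r) (tS2 s l' r)
| st_binr : forall s l r r', step_gen G only1 r r' ->
    step_gen G only1 (tS2 s l r) (tS2 s l r').

Definition step (G : sCFTG) := step_gen G false.
Definition step1 (G : sCFTG) := step_gen G true.

Definition lang (G : sCFTG) (u : ttree S0 S2) : Prop :=
  clos_refl_trans tr (step G) (tN0 (start G)) (emb u).

Inductive dir := D1 | D2.

Fixpoint spine_path (d : S2 -> dir) (C : tr) : Prop :=
  match C with
  | tBox => True
  | tN0 _ | tS0 _ => False
  | tN1 _ C' => spine_path d C'
  | tS2 s l r => match d s with D1 => spine_path d l | D2 => spine_path d r end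
  end.

Definition spine_grammar (G : sCFTG) (d : S2 -> dir) : Prop :=
  wf_sCFTG G /\ forall n C, In (n, C) (prods1 G) -> spine_path d C.

Definition normal_form (G : sCFTG) : Prop :=
  (forall n r, In (n, r) (prods0 G) ->
     (exists b a, r = tN1 b (tS0 a)) \/ (exists a, r = tS0 a)) /\
  (forall n C, In (n, C) (prods1 G) ->
     (exists b1 b2, C = tN1 b1 (tN1 b2 tBox)) \/
     (exists s a, a <> start G /\ (C = tS2 s tBox (tN0 a) \/ C = tS2 s (tN0 a) tBox))).

Fixpoint spinal_shape (t : tr) : Prop :=
  match t with
  | tN0 _ | tS0 _ => True
  | tN1 _ _ | tBox => False
  | tS2 _ l r => spinal_shape l /\ spinal_shape r
  end.

Fixpoint containsN0 (n : N0) (t : tr) : Prop :=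
  match t with
  | tN0 m => m = n
  | tS0 _ | tBox => False
  | tN1 _ t' => containsN0 n t'
  | tS2 _ l r => containsN0 n l \/ containsN0 n r
  end.

Definition spinal_trees (G : sCFTG) (n : N0) (t : tr) : Prop :=
  spinal_shape t /\
  exists t1, step G (tN0 n) t1 /\ clos_refl_trans tr (step1 G) t1 t.

Definition normalized (G : sCFTG) : Prop :=
  normal_form G /\ forall n t, spinal_trees G n t -> ~ containsN0 n t.

End Grammars.

(* Main.v *)
Require Import Defs.
From Stdlib Require Import List Relations ClassicalEpsilon Lia.
From mathcomp Require Import all_boot zify.
Set Implicit Arguments. Unset Strict Implicit. Unset Printing Implicit Defensive.
Section Gen.
Variables (N0 N1 S0 S2 : Type) (G : sCFTG N0 N1 S0 S2) (d : S2 -> dir).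
Notation tr := (tree N0 N1 S0 S2).
Notation tt := (ttree (option S0) S2).
Implicit Types (C t l r : tr).

Inductive DerH : nat -> tr -> tt -> Prop :=
| H_S0 h a : DerH h (tS0 a) (TLeaf (Some a))
| H_Box h : DerH h tBox (TLeaf None)
| H_S2 h s l r ul ur : DerH h l ul -> DerH h r ur -> DerH h.+1 (tS2 s l r) (TBin s ul ur)
| H_N0 h n r u : In (n, r) (prods0 G) -> DerH h r u -> DerH h.+1 (tN0 n) u
| H_N1 h b C t u : In (b, C) (prods1 G) -> DerH h (fill C t) u -> DerH h.+1 (tN1 b t) u.

Definition Der t u := exists h, DerH h t u.

Lemma DerH_mono h t u : DerH h t u -> forall h', h <= h' -> DerH h' t u.
Proof.
  induction 1 => h' Hle; try by constructor.
  all: destruct h' as [|h']; first by [].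
  all: rewrite ltnS in Hle.
  - apply: H_S2; [apply: IHDerH1|apply: IHDerH2]; exact Hle.
  - apply: H_N0; eauto.
  - apply: H_N1; eauto.
Qed.

Lemma Der_S2 s l r ul ur : Der l ul -> Der r ur -> Der (tS2 s l r) (TBin s ul ur).
Proof.
  move=> [h1 H1] [h2 H2]; exists (maxn h1 h2).+1; apply: H_S2;
  apply: DerH_mono; eauto; lia.
Qed.
Lemma Der_N0 n r u : In (n, r) (prods0 G) -> Der r u -> Der (tN0 n) u.
Proof. move=> Hi [h H]; exists h.+1; exact: H_N0 Hi H. Qed.
Lemma Der_N1 b C t u : In (b, C) (prods1 G) -> Der (fill C t) u -> Der (tN1 b t) u.
Proof. move=> Hi [h H]; exists h.+1; exact: H_N1 Hi H. Qed.

Fixpoint plug (w : seq (S2 * tt)) (v : tt) : tt :=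
  match w with
  | [::] => v
  | (s, x) :: w' => match d s with D1 => TBin s (plug w' v) x | D2 => TBin s x (plug w' v) end
  end.

Lemma plug_cat w1 w2 v : plug (w1 ++ w2) v = plug w1 (plug w2 v).
Proof. elim: w1 => [|[s x] w IH] //=; by rewrite IH. Qed.

Lemma plug_split w1 v w e : plug w1 v = plug w (TLeaf e) ->
  exists w2, w = w1 ++ w2 /\ v = plug w2 (TLeaf e).
Proof.
  elim: w1 w => [|[s x] w1 IH] [|[s' x'] w] /=.
  - move=> ->; by exists [::].
  - move=> ->; by exists ((s',x')::w).
  - by case: (d s).
  - move=> H.
    have Hs : s = s' by move: H; case: (d s); case: (d s') => H; injection H.
    subst s'.
    have [H1 H2] : plug w1 v = plug w (TLeaf e) /\ x = x'
      by move: H; case: (d s) => H; injection H.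
    subst x'. case: (IH _ H1) => w2 [-> ->]. by exists w2.
Qed.

Lemma fill_fill C1 C2 t : fill (fill C1 C2) t = fill C1 (fill C2 t).
Proof. elim: C1 => //= [b C IH|s l IHl r IHr]; by rewrite ?IH ?IHl ?IHr. Qed.
Lemma fill_nbox0 C t : nbox C = 0 -> fill C t = C.
Proof. elim: C => //= [b C IH|s l IHl r IHr] H; rewrite ?IH ?IHl ?IHr //; lia. Qed.
Lemma nbox_fill C t : nbox (fill C t) = nbox C * nbox t.
Proof. elim: C => /= [n|a|b C' IH|s l IHl r IHr|]; rewrite ?IH ?IHl ?IHr; lia. Qed.
Lemma spine_path_nbox C : spine_path d C -> 0 < nbox C.
Proof. elim: C => //= s l IHl r IHr; case: (d s) => H; [have := IHl H|have := IHr H]; lia. Qed.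
Lemma spine_path_fill C C' : spine_path d C -> spine_path d C' -> spine_path d (fill C C').
Proof. elim: C => //= s l IHl r IHr; case: (d s); eauto. Qed.

Lemma repl t t' : (forall u, Der t' u -> Der t u) ->
  forall h x u, DerH h x u -> forall D, x = fill D t' -> Der (fill D t) u.
Proof.
  move=> Ht h x u H; induction H => C0 Hx;
  destruct C0; simpl in Hx |- *; try discriminate;
  try (apply Ht; rewrite -Hx; eexists; econstructor; eauto; fail);
  try (injection Hx => *; subst; eexists; econstructor; eauto; fail).
  - injection Hx => E1 E2 E3; subst. apply Der_S2; eauto.
  - injection Hx => E1 E2; subst. apply: Der_N1; first exact H.
    rewrite -fill_fill. apply IHDerH. by rewrite fill_fill.
Unshelve. all: exact 0. Qed.

Lemma step_back t t' : step G t t' -> forall u, Der t' u -> Der t u.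
Proof.
  unfold step; induction 1 => u Hu.
  - exact: Der_N0 H0 Hu.
  - exact: Der_N1 H Hu.
  - case: Hu => h Hh; inversion Hh; subst.
    apply: Der_N1; first eassumption.
    exact: (repl IHstep_gen H5).
  - case: Hu => h Hh; inversion Hh; subst.
    apply: Der_S2; [apply IHstep_gen; by exists h0 | by exists h0].
  - case: Hu => h Hh; inversion Hh; subst.
    apply: Der_S2; [by exists h0 | apply IHstep_gen; by exists h0].
Qed.

Fixpoint ms (u : ttree S0 S2) : tt :=
  match u with TLeaf a => TLeaf (Some a) | TBin s l r => TBin s (ms l) (ms r) end.
Fixpoint embO (u : tt) : tr :=
  match u with
  | TLeaf (Some a) => tS0 a | TLeaf None => tBox
  | TBin s l r => tS2 s (embO l) (embO r) end.
Lemma embO_ms u : embO (ms u) = emb N0 N1 u.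
Proof. elim: u => //= s l -> r ->. by []. Qed.

Lemma Der_emb u : Der (emb N0 N1 u) (ms u).
Proof. elim: u => [a|s l IHl r IHr] /=; [exists 0; constructor|exact: Der_S2]. Qed.

Lemma rt_S2l s l l' r : clos_refl_trans tr (step G) l l' ->
  clos_refl_trans tr (step G) (tS2 s l r) (tS2 s l' r).
Proof. induction 1; [apply rt_step; by constructor|apply rt_refl|eapply rt_trans; eauto]. Qed.
Lemma rt_S2r s l r r' : clos_refl_trans tr (step G) r r' ->
  clos_refl_trans tr (step G) (tS2 s l r) (tS2 s l r').
Proof. induction 1; [apply rt_step; by constructor|apply rt_refl|eapply rt_trans; eauto]. Qed.

Lemma DerH_rt h t v : DerH h t v -> clos_refl_trans tr (step G) t (embO v).
Proof.
  induction 1 => /=; try apply rt_refl.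
  - eapply rt_trans; [apply rt_S2l; eauto| apply rt_S2r; eauto].
  - eapply rt_trans; [apply rt_step; constructor; eauto|eauto].
  - eapply rt_trans; [apply rt_step; constructor; eauto|eauto].
Qed.

Lemma lang_Der u : lang G u <-> Der (tN0 (start G)) (ms u).
Proof.
  split.
  - rewrite /lang => /clos_rt_rt1n_iff H.
    remember (emb N0 N1 u) as z eqn:Ez. induction H.
    + subst; exact: Der_emb.
    + exact: (step_back H (IHclos_refl_trans_1n Ez)).
  - case=> h /DerH_rt. by rewrite embO_ms.
Qed.

End Gen.
Section Core.
Variables (N0 N1 S0 S2 : Type) (G : sCFTG N0 N1 S0 S2) (d : S2 -> dir).
Notation tr := (tree N0 N1 S0 S2).
Notation tt := (ttree (option S0) S2).
Implicit Types (C t l r : tr).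
Notation DerH := (DerH G).
Notation Der := (Der G).
Notation plug := (@plug S0 S2 d).

Hypothesis Hyp0 : forall n r, In (n, r) (prods0 G) -> nbox r = 0.
Hypothesis Hyp1 : forall b C, In (b, C) (prods1 G) -> nbox C = 1 /\ spine_path d C.

Lemma DerH_S h t u : DerH h t u -> DerH h.+1 t u.
Proof. move=> H; apply: (DerH_mono H); lia. Qed.

Lemma plug_bin w e s ul ur : plug w (TLeaf e) = TBin s ul ur ->
  exists x w', w = (s, x) :: w' /\
   match d s with D1 => ul = plug w' (TLeaf e) /\ ur = x
                | D2 => ul = x /\ ur = plug w' (TLeaf e) end.
Proof.
  case: w => [|[s' x] w'] /= H; first discriminate.
  exists x, w'. move: H. case E: (d s') => H; injection H => H1 H2 H3;
  subst; rewrite E; split => //; split; congruence.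
Qed.

Lemma plug_leaf w e a : plug w (TLeaf e) = TLeaf a -> w = [::].
Proof. case: w => [|[s x] w] //=; by case: (d s). Qed.

Lemma nbox_S2 s l r : nbox (tS2 s l r) = 1 -> spine_path d (tS2 s l r) ->
  match d s with D1 => nbox l = 1 /\ nbox r = 0 /\ spine_path d l
               | D2 => nbox r = 1 /\ nbox l = 0 /\ spine_path d r end.
Proof.
  move=> /= H; case: (d s) => Hs.
  - have := spine_path_nbox Hs => ?. split; [lia|split; [lia|exact Hs]].
  - have := spine_path_nbox Hs => ?. split; [lia|split; [lia|exact Hs]].
Qed.

Lemma decomp h : forall C t u, DerH h (fill C t) u -> nbox C = 1 -> spine_path d C ->
  exists w v, DerH h C (plug w (TLeaf None)) /\ DerH h t v /\ u = plug w v.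
Proof.
  elim: h => [|h IH] C t u.
  - case: C => //= [b C|s l r|] H; try by inversion H.
    move=> _ _. exists [::], u; split; [constructor|split; auto].
  - case: C => //= [b C|s l r|] H.
    + inversion H; subst => Hn Hs.
      rewrite -fill_fill in H5.
      have [Hn1 Hs1] := Hyp1 H3.
      case: (IH _ _ _ H5).
      * by rewrite nbox_fill Hn1 Hn.
      * exact: spine_path_fill.
      move=> w [v [H1 [H2 H4]]].
      exists w, v; split; [exact: H_N1 H3 H1|split; [exact: DerH_S H2|auto]].
    + move=> Hn Hs. have Hns := nbox_S2 Hn Hs. inversion H; subst.
      destruct (d s) eqn:E; [destruct Hns as [Hl [Hr Hsl]]|destruct Hns as [Hr [Hl Hsr]]].
      * rewrite (fill_nbox0 _ Hr) in H6.
        case: (IH _ _ _ H5 Hl Hsl) => w [v [H1 [H2 H3]]].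
        exists ((s, ur) :: w), v; split; [|split].
        -- rewrite /= E. by constructor.
        -- exact: DerH_S H2.
        -- by rewrite /= E H3.
      * rewrite (fill_nbox0 _ Hl) in H5.
        case: (IH _ _ _ H6 Hr Hsr) => w [v [H1 [H2 H3]]].
        exists ((s, ul) :: w), v; split; [|split].
        -- rewrite /= E. by constructor.
        -- exact: DerH_S H2.
        -- by rewrite /= E H3.
    + move=> _ _. exists [::], u; split; [constructor|split; auto].
Qed.

Lemma comp h : forall C w, DerH h C (plug w (TLeaf None)) -> nbox C = 1 -> spine_path d C ->
  forall t v, Der t v -> Der (fill C t) (plug w v).
Proof.
  elim: h => [|h IH] C w.
  - case: C => //= [b C|s l r|] H; try by inversion H.
    inversion H. rewrite (plug_leaf (esym H1)) /=. by [].
  - case: C => //= [b C|s l r|] H.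
    + inversion H; subst => Hn Hs t v Hv.
      have [Hn1 Hs1] := Hyp1 H3.
      apply: Der_N1; first exact H3.
      rewrite -fill_fill. apply: IH; eauto.
      * by rewrite nbox_fill Hn1 Hn.
      * exact: spine_path_fill.
    + move=> Hn Hs t v Hv. have Hns := nbox_S2 Hn Hs. inversion H; subst.
      case: (plug_bin (esym H5)) => x [w' [-> Hw]].
      destruct (d s) eqn:E; [destruct Hns as [Hl [Hr Hsl]]|destruct Hns as [Hr [Hl Hsr]]];
        destruct Hw as [-> ->].
      * rewrite (fill_nbox0 _ Hr) /= E. apply: Der_S2; [exact: IH H3 Hl Hsl _ _ Hv|by exists h].
      * rewrite (fill_nbox0 _ Hl) /= E. apply: Der_S2; [by exists h|exact: IH H6 Hr Hsr _ _ Hv].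
    + inversion H. rewrite (plug_leaf (esym H1)) /=. by [].
Qed.

Lemma comp' C w : Der C (plug w (TLeaf None)) -> nbox C = 1 -> spine_path d C ->
  forall t v, Der t v -> Der (fill C t) (plug w v).
Proof. case=> h H; exact: comp H. Qed.


Variable P : tr -> Prop.
Hypothesis HP_N1 : forall b t, P (tN1 b t) -> P t.
Hypothesis HP_N1b : forall b, P (tN1 b tBox).
Hypothesis HP_S2 : forall s l r, P (tS2 s l r) -> P l /\ P r.
Hypothesis HP_0 : forall n r, In (n, r) (prods0 G) -> P r.
Hypothesis HP_1 : forall b C, In (b, C) (prods1 G) -> P C.

Definition K := ((tr * option S0) + (S2 * tr))%type.
Definition Kw (k : K) (w : seq (S2 * tt)) : Prop :=
  match k with
  | inl (t, e) => Der t (plug w (TLeaf e))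
  | inr (s, a) => exists v, w = [:: (s, v)] /\ Der a v
  end.
Definition PK (k : K) : Prop := match k with inl (t, _) => P t | inr (_, a) => P a end.

Definition Res t w e : Prop :=
 (1 < size w -> exists k1 k2 x y, w = x ++ y /\ x <> [::] /\ y <> [::] /\ PK k1 /\ PK k2 /\
     Kw k1 x /\ Kw k2 y /\
     forall x' y', Kw k1 x' -> Kw k2 y' -> Der t (plug (x' ++ y') (TLeaf e))) /\
 (forall s v, w = [:: (s, v)] -> exists a, P a /\ Der a v /\
     forall v', Der a v' -> Der t (plug [:: (s, v')] (TLeaf e))).

Lemma Res_map t1 t2 w e1 e2 :
  (forall z, Der t1 (plug z (TLeaf e1)) -> Der t2 (plug z (TLeaf e2))) -> Res t1 w e1 -> Res t2 w e2.
Proof.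
  move=> Ht [H1 H2]; split.
  - move=> /H1 [k1 [k2 [x [y [? [? [? [? [? [? [? H]]]]]]]]]]].
    exists k1, k2, x, y; do 7 (split; first done). move=> x' y' ? ?; apply: Ht; auto.
  - move=> s v /H2 [a [? [? H]]]. exists a; do 2 (split; first done). move=> v' ?; apply: Ht; auto.
Qed.

Lemma Res_nil t e : Res t [::] e.
Proof. by split. Qed.

Lemma fill_box C : fill C tBox = C.
Proof. elim: C => //= [b C ->|s l -> r ->] //. Qed.

Lemma core h : forall t u, DerH h t u -> P t -> forall w e, u = plug w (TLeaf e) -> Res t w e.
Proof.
  elim: h => [|h IH] t u H Pt w e Hu; subst u; inversion H; subst;
    try (match goal with Hx : TLeaf _ = plug ?ww _ |- _ => rewrite (plug_leaf (esym Hx)); exact: Res_nil end).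

  -
    have [Pl Pr] := HP_S2 Pt.
    match goal with Hx : TBin _ _ _ = plug w _ |- _ => case: (plug_bin (esym Hx)) => x [w' [Ew Hw]] end.
    subst w.
    destruct (d s) eqn:E; destruct Hw as [Hul Hur]; subst.
    + split.
      * move=> Hs. exists (inr (s, r)), (inl (l, e)), [:: (s, x)], w'.
        split; first done. split; first done. split; first by move=> ?; subst w'.
        split; first done. split; first done.
        split; first by exists x; split; [|exists h].
        split; first by exists h.
        move=> x' y' [v [-> Hv]] Hy /=. rewrite E. exact: Der_S2.
      * move=> s0 v [Hs Hv Hw']; subst. exists r; split; first done. split; first by exists h.
        move=> v' Hv' /=. rewrite E. apply: Der_S2; last done. by exists h.
    + split.
      * move=> Hs. exists (inr (s, l)), (inl (r, e)), [:: (s, x)], w'.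
        split; first done. split; first done. split; first by move=> ?; subst w'.
        split; first done. split; first done.
        split; first by exists x; split; [|exists h].
        split; first by exists h.
        move=> x' y' [v [-> Hv]] Hy /=. rewrite E. exact: Der_S2.
      * move=> s0 v [Hs Hv Hw']; subst. exists l; split; first done. split; first by exists h.
        move=> v' Hv' /=. rewrite E. apply: Der_S2; first done. by exists h.
  -
    apply: (Res_map (t1 := r)); first by move=> z; apply: Der_N0.
    exact: IH H2 (HP_0 H1) _ _ erefl.
  -
    have [Hn Hs] := Hyp1 H1.
    case: (decomp H2 Hn Hs) => w1 [v [HC [Ht Hv]]].
    case: (plug_split (esym Hv)) => w2 [Ew Ev]. subst w v.
    have Pt0 := HP_N1 Pt. have PC := HP_1 H1.
    have R2 := IH _ _ Ht Pt0 w2 e erefl.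
    have R1 := IH _ _ HC PC w1 None erefl. clear H H2 Hv.
    case: w1 HC R1 => [|a w1] HC R1.
    + apply: (Res_map (t1 := t0)); last exact R2.
      move=> z Hz. apply: Der_N1; first exact H1.
      have := comp' (ex_intro _ h HC) Hn Hs Hz. by [].
    + case: w2 Ht R2 => [|a2 w2] Ht R2.
      * rewrite cats0. apply: (Res_map (t1 := C)); last exact R1.
        move=> z Hz. apply: Der_N1; first exact H1.
        exact: comp' Hz Hn Hs _ _ (ex_intro _ h Ht).
      * split.
        -- move=> _. exists (inl (tN1 b tBox, None)), (inl (t0, e)), (a :: w1), (a2 :: w2).
           do 5 (split; first done).
           split. { apply: Der_N1; first exact H1. rewrite fill_box. by exists h. }
           split; first by exists h.
           move=> x' y' Hx Hy. rewrite plug_cat.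
           exact: (comp' (C := tN1 b tBox)) Hx _ _ _ _ Hy.
           move=> s v /= [] _ Hw; by case: w1 Hw {HC R1}.
Qed.

End Core.
Lemma memIn (T : eqType) (x : T) (s : seq T) : x \in s -> In x s.
Proof. elim: s => //= y s IH; rewrite in_cons => /orP [/eqP ->|/IH]; auto. Qed.

Definition dec (P : Prop) : bool := if excluded_middle_informative P then true else false.
Lemma decP (P : Prop) : dec P = true <-> P.
Proof. rewrite /dec; case: excluded_middle_informative => //. Qed.

Section Main.
Variables (N0 N1 S0 S2 : finType) (G : sCFTG N0 N1 S0 S2) (d : S2 -> dir).
Hypothesis HG : spine_grammar G d.
Notation tr := (tree N0 N1 S0 S2).
Notation tt := (ttree (option S0) S2).
Implicit Types (C t l r : tr).

Fixpoint subs t : list tr :=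
  t :: match t with
       | tN1 _ t' => subs t'
       | tS2 _ l r => List.app (subs l) (subs r)
       | _ => nil end.

Definition roots : list tr :=
  List.app (List.map snd (prods0 G)) (List.app (List.map snd (prods1 G))
   (List.app (List.map tN0 (enum N0)) (List.map (fun b => tN1 b tBox) (enum N1)))).
Definition TS := flat_map subs roots.
Definition PT t := In t TS.

Lemma subs_self t : In t (subs t).
Proof. case: t => /=; auto. Qed.

Lemma subs_N1 b t y : In (tN1 b t) (subs y) -> In t (subs y).
Proof.
  elim: y => /= [n|a|b' y IH|s l IHl r IHr|]; try by intuition discriminate.
  - case=> [[_ <-]|H]; right; [exact: subs_self|auto].
  - case=> [//|/in_app_iff [H|H]]; right; apply/in_app_iff; auto.
Qed.

Lemma subs_S2 s l r y : In (tS2 s l r) (subs y) -> In l (subs y) /\ In r (subs y).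
Proof.
  elim: y => /= [n|a|b' y IH|s' l' IHl r' IHr|]; try by intuition discriminate.
  - case=> [[_ <- <-]|/in_app_iff [H|H]].
    + split; right; apply/in_app_iff; [left|right]; exact: subs_self.
    + case: (IHl H) => ? ?; split; right; apply/in_app_iff; auto.
    + case: (IHr H) => ? ?; split; right; apply/in_app_iff; auto.
Qed.

Lemma roots_TS x : In x roots -> PT x.
Proof. move=> H; apply/in_flat_map; exists x; split; [exact H|exact: subs_self]. Qed.

Lemma HP_N1 b t : PT (tN1 b t) -> PT t.
Proof. move=> /in_flat_map [y [Hy H]]; apply/in_flat_map; exists y; split; [exact Hy|exact: subs_N1 H]. Qed.
Lemma HP_S2 s l r : PT (tS2 s l r) -> PT l /\ PT r.
Proof.
  move=> /in_flat_map [y [Hy /subs_S2 [H1 H2]]]; split; apply/in_flat_map; exists y; auto.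
Qed.
Lemma HP_N1b b : PT (tN1 b tBox).
Proof.
  apply: roots_TS; rewrite /roots; do 3 (apply/in_app_iff; right).
  apply/in_map_iff; exists b; split => //. apply: memIn; exact: mem_enum.
Qed.
Lemma HP_N0 n : PT (tN0 n).
Proof.
  apply: roots_TS; rewrite /roots; do 2 (apply/in_app_iff; right); apply/in_app_iff; left.
  apply/in_map_iff; exists n; split => //. apply: memIn; exact: mem_enum.
Qed.
Lemma HP_0 n r : In (n, r) (prods0 G) -> PT r.
Proof.
  move=> H; apply: roots_TS; rewrite /roots; apply/in_app_iff; left.
  apply/in_map_iff; exists (n, r); auto.
Qed.
Lemma HP_1 b C : In (b, C) (prods1 G) -> PT C.
Proof.
  move=> H; apply: roots_TS; rewrite /roots; apply/in_app_iff; right; apply/in_app_iff; left.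
  apply/in_map_iff; exists (b, C); auto.
Qed.

Lemma Hyp1 b C : In (b, C) (prods1 G) -> nbox C = 1 /\ spine_path d C.
Proof. case: HG => [[_ H1] H2] H; split; eauto. Qed.

Notation Idx := 'I_(length TS).
Definition tI (i : Idx) : tr := List.nth i TS tBox.

Lemma tI_In i : PT (tI i).
Proof. apply: nth_In. apply/ltP. exact: ltn_ord. Qed.

Lemma idx_of t : PT t -> exists i : Idx, tI i = t.
Proof.
  move=> /(In_nth _ _ tBox) [n [/ltP Hn Hnth]].
  by exists (Ordinal Hn).
Qed.


Notation Sym := ((Idx * option S0) + (S2 * Idx))%type.
Notation N1' := (Sym * bool)%type.
Notation N0' := (option (Idx * bool)).
Notation tr' := (tree N0' N1' S0 S2).

Definition toK (s : Sym) : ((tr * option S0) + (S2 * tr))%type :=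
  match s with inl (i, e) => inl (tI i, e) | inr (σ, i) => inr (σ, tI i) end.
Definition Wsym (s : Sym) w := Kw G d (toK s) w.

Definition tX (X : N0') : tr := match X with None => tN0 (start G) | Some (i, _) => tI i end.
Definition par (X : N0') : bool := match X with None => false | Some (_, p) => p end.

Notation code0 := ((N0' * S0) * option Sym)%type.
Notation code1 := ((Sym * bool) * ((Sym * Sym) + (S2 * Idx)))%type.

Definition f0 (c : code0) : N0' * tr' :=
  match c with
  | (X, α, None) => (X, tS0 α)
  | (X, α, Some s) => (X, tN1 (s, par X) (tS0 α))
  end.
Definition valid0 (c : code0) : Prop :=
  match c with
  | (X, α, None) => Der G (tX X) (TLeaf (Some α))
  | (X, α, Some s) => forall w, Wsym s w -> Der G (tX X) (plug d w (TLeaf (Some α)))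
  end.
Definition f1 (c : code1) : N1' * tr' :=
  match c with
  | (s, p, inl (s1, s2)) => ((s, p), tN1 (s1, p) (tN1 (s2, p) tBox))
  | (s, p, inr (σ, a)) => ((s, p), match d σ with
                             | D1 => tS2 σ tBox (tN0 (Some (a, ~~ p)))
                             | D2 => tS2 σ (tN0 (Some (a, ~~ p))) tBox end)
  end.
Definition valid1 (c : code1) : Prop :=
  match c with
  | (s, p, inl (s1, s2)) => forall x y, Wsym s1 x -> Wsym s2 y -> Wsym s (x ++ y)
  | (s, p, inr (σ, a)) => forall v, Der G (tI a) v -> Wsym s [:: (σ, v)]
  end.

Definition G' : sCFTG N0' N1' S0 S2 :=
  {| start := None;
     prods0 := List.map f0 (List.filter (fun c => dec (valid0 c)) (enum (code0 : finType)));
     prods1 := List.map f1 (List.filter (fun c => dec (valid1 c)) (enum (code1 : finType))) |}.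

Lemma In_p0 x : In x (prods0 G') <-> exists c, valid0 c /\ f0 c = x.
Proof.
  rewrite /= in_map_iff. split.
  - move=> [c [Hc /filter_In [_ /decP H]]]. by exists c.
  - move=> [c [H Hc]]. exists c; split => //. apply/filter_In; split.
    + apply: memIn; exact: mem_enum.
    + by apply/decP.
Qed.
Lemma In_p1 x : In x (prods1 G') <-> exists c, valid1 c /\ f1 c = x.
Proof.
  rewrite /= in_map_iff. split.
  - move=> [c [Hc /filter_In [_ /decP H]]]. by exists c.
  - move=> [c [H Hc]]. exists c; split => //. apply/filter_In; split.
    + apply: memIn; exact: mem_enum.
    + by apply/decP.
Qed.

Lemma G'_spine : spine_grammar G' d.
Proof.
  split; first split.
  - move=> n r /In_p0 [[[X α] [s|]] [_ /= [_ <-]]] //.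
  - move=> n C /In_p1 [[[s p] [[s1 s2]|[σ a]]] [_ /= [_ <-]]] //=.
    by case: (d σ).
  - move=> n C /In_p1 [[[s p] [[s1 s2]|[σ a]]] [_ /= [_ <-]]] //=.
    case E: (d σ) => /=; by rewrite E.
Qed.

Lemma G'_nf : normal_form G'.
Proof.
  split.
  - move=> n r /In_p0 [[[X α] [s|]] [_ /= [_ <-]]].
    + left; by exists (s, par X), α.
    + right; by exists α.
  - move=> n C /In_p1 [[[s p] [[s1 s2]|[σ a]]] [_ /= [_ <-]]].
    + left; by exists (s1, p), (s2, p).
    + right; exists σ, (Some (a, ~~ p)); split => //. by case: (d σ); auto.
Qed.

Fixpoint Inv (p : bool) (t : tr') : Prop :=
  match t with
  | tN0 X => exists a, X = Some (a, ~~ p)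
  | tS0 _ | tBox => True
  | tN1 (_, q) t => q = p /\ Inv p t
  | tS2 _ l r => Inv p l /\ Inv p r
  end.

Lemma Inv_fill p (C t : tr') : Inv p C -> Inv p t -> Inv p (fill C t).
Proof. elim: C => //= [[s q] C IH [-> H]|s l IHl r IHr [H1 H2]] Ht; auto. Qed.

Lemma Inv_step1 p (t t' : tr') : step1 G' t t' -> Inv p t -> Inv p t'.
Proof.
  rewrite /step1; elim => //=.
  - move=> [s q] C t0 /In_p1 [[[s0 p0] [[s1 s2]|[σ a]]] [_ /= E]];
    case: E => E1 E2 E3; subst => /= [[E Ht]]; subst.
    + by [].
    + case: (d σ) => /=; split => //; by exists a.
  - move=> [s q] t0 t0' _ IH [-> H]; auto.
  - move=> s l l' r _ IH [H1 H2]; auto.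
  - move=> s l r r' _ IH [H1 H2]; auto.
Qed.

Lemma Inv_rt p (t t' : tr') : clos_refl_trans _ (step1 G') t t' -> Inv p t -> Inv p t'.
Proof. elim => [x y Hs|x|x y z _ IH1 _ IH2] H; [exact: Inv_step1 Hs H|exact H|auto]. Qed.

Lemma Inv_contains p n (t : tr') : Inv p t -> containsN0 n t -> exists a, n = Some (a, ~~ p).
Proof.
  elim: t => //= [X [a ->] <-|[s q] t IH [_ H]|s l IHl r IHr [H1 H2] [H|H]]; eauto.
Qed.

Lemma G'_normalized : normalized G'.
Proof.
  split; first exact: G'_nf.
  move=> n t [_ [t1 [H1 H2]]] Hc.
  have I1 : Inv (par n) t1.
  { inversion H1; subst. move: H3 => /In_p0 [[[X α] [s|]] [_ /= [E <-]]] //=.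
    case: E => <-. by split. }
  have [a Ha] := Inv_contains (Inv_rt H2 I1) Hc.
  case: n Ha {H1 H2 Hc I1} => [[i q]|] //= [_]. by case: q.
Qed.

Fixpoint Sem (t : tr') (u : tt) : Prop :=
  match t with
  | tN0 X => Der G (tX X) u
  | tS0 a => u = TLeaf (Some a)
  | tBox => u = TLeaf None
  | tS2 σ l r => exists ul ur, u = TBin σ ul ur /\ Sem l ul /\ Sem r ur
  | tN1 (s, _) t => exists w v, u = plug d w v /\ Wsym s w /\ Sem t v
  end.

Lemma sound h (t : tr') u : DerH G' h t u -> Sem t u.
Proof.
  elim => //=.
  - move=> h0 s l r ul ur _ H1 _ H2. by exists ul, ur.
  - move=> h0 n r u0 /In_p0 [[[X α] [s|]] [V /= [E1 E2]]] _; subst => /=.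
    + move=> [w [v [-> [Hw ->]]]]. exact: V.
    + by move=> ->.
  - move=> h0 b C t0 u0 /In_p1 [[[s p] [[s1 s2]|[σ a]]] [V /= [E1 E2]]] _; subst => /=.
    + move=> [w1 [v1 [-> [H1 [w2 [v2 [-> [H2 H3]]]]]]]].
      exists (w1 ++ w2), v2; rewrite plug_cat; split => //; split => //; exact: V.
    + case E: (d σ) => /=; move=> [ul [ur [-> [H1 H2]]]].
      * exists [:: (σ, ur)], ul; rewrite /= E; split => //; split => //; exact: V.
      * exists [:: (σ, ul)], ur; rewrite /= E; split => //; split => //; exact: V.
Qed.

Fixpoint nonone (u : tt) : Prop :=
  match u with TLeaf e => e <> None | TBin _ l r => nonone l /\ nonone r end.
Fixpoint tsize (u : tt) : nat :=
  match u with TLeaf _ => 1 | TBin _ l r => (tsize l + tsize r).+1 end.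

Lemma nonone_ms u : nonone (ms u).
Proof. elim: u => //= s l ? r ?; by split. Qed.

Lemma spine_dec (u : tt) : exists w e, u = plug d w (TLeaf e).
Proof.
  elim: u => [e|s l [wl [el ->]] r [wr [er ->]]]; first by exists [::], e.
  case E: (d s).
  - exists ((s, plug d wr (TLeaf er)) :: wl), el; by rewrite /= E.
  - exists ((s, plug d wl (TLeaf el)) :: wr), er; by rewrite /= E.
Qed.

Lemma plug_sides w (v : tt) : nonone (plug d w v) -> nonone v /\
  forall σ x, In (σ, x) w -> nonone x /\ tsize x < tsize (plug d w v).
Proof.
  elim: w => [|[s x] w IH] /=; first by split.
  case: (d s) => /= [[H1 H2]|[H1 H2]].
  - have [Hv Hw] := IH H1; split => // σ y [[_ <-]|Hin]; first by split => //; lia.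
    have [? ?] := Hw _ _ Hin; split => //; lia.
  - have [Hv Hw] := IH H2; split => // σ y [[_ <-]|Hin]; first by split => //; lia.
    have [? ?] := Hw _ _ Hin; split => //; lia.
Qed.

Lemma In_cat (A : Type) (z : A) x y : In z (x ++ y) <-> In z x \/ In z y.
Proof. elim: x => /= [|a x IH]; [tauto|rewrite IH; tauto]. Qed.

Lemma PK_sym k : PK PT k -> exists s : Sym, forall w, Wsym s w <-> Kw G d k w.
Proof.
  case: k => [[t e]|[σ t]] /= /idx_of [i Hi].
  - exists (inl (i, e)) => w; by rewrite /Wsym /= Hi.
  - exists (inr (σ, i)) => w; by rewrite /Wsym /= Hi.
Qed.

Lemma SplitSym s w : Wsym s w -> 1 < size w ->
  exists s1 s2 x y, w = x ++ y /\ x <> [::] /\ y <> [::] /\ Wsym s1 x /\ Wsym s2 y /\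
    forall x' y', Wsym s1 x' -> Wsym s2 y' -> Wsym s (x' ++ y').
Proof.
  case: s => [[i e]|[σ i]].
  - rewrite /Wsym /= => [[h Hh]] Hs.
    have [R _] := core (w := w) (e := e) Hyp1 HP_N1 HP_N1b HP_S2 HP_0 HP_1 Hh (tI_In i) erefl.
    case: (R Hs) => k1 [k2 [x [y [Ew [Hx [Hy [P1 [P2 [K1 [K2 Hinc]]]]]]]]]].
    case: (PK_sym P1) => s1 Hs1. case: (PK_sym P2) => s2 Hs2.
    exists s1, s2, x, y. do 3 (split; first done).
    split; first by apply/Hs1. split; first by apply/Hs2.
    move=> x' y' /Hs1 ? /Hs2 ?. exact: Hinc.
  - by rewrite /Wsym /= => [[v [-> _]]].
Qed.

Lemma LetterSym s σ v : Wsym s [:: (σ, v)] ->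
  exists a : Idx, Der G (tI a) v /\ forall v', Der G (tI a) v' -> Wsym s [:: (σ, v')].
Proof.
  case: s => [[i e]|[σ' i]].
  - rewrite /Wsym /= => [[h Hh]].
    have [_ R] := core (w := [:: (σ, v)]) (e := e) Hyp1 HP_N1 HP_N1b HP_S2 HP_0 HP_1 Hh (tI_In i) erefl.
    case: (R σ v erefl) => a [Pa [Ha Hinc]].
    case: (idx_of Pa) => j Hj. exists j; rewrite Hj; split => //.
  - rewrite /Wsym /= => [[v0 [E Hv]]]. case: E => E1 E2; subst. exists i; split => // v' H.
    by exists v'.
Qed.

Lemma C1 m : forall w, size w <= m -> w <> [::] ->
  (forall σ x, In (σ, x) w -> forall X, Der G (tX X) x -> Der G' (tN0 X) x) ->
  forall s p, Wsym s w -> forall (t : tr') v, Der G' t v -> Der G' (tN1 (s, p) t) (plug d w v).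
Proof.
  elim: m => [|m IH] w Hsz Hne Hl s p Hw t v Hv.
  - by case: w Hsz Hne {Hl Hw}.
  - case: w Hsz Hne Hl Hw => [//|[σ x] [|a w']] Hsz _ Hl Hw.
    + case: (LetterSym Hw) => a [Ha Hall].
      have Hx : Der G' (tN0 (Some (a, ~~ p))) x by apply: Hl; [left; reflexivity|exact Ha].
      have Hin : In ((s, p), match d σ with
                             | D1 => tS2 σ tBox (tN0 (Some (a, ~~ p)))
                             | D2 => tS2 σ (tN0 (Some (a, ~~ p))) tBox end) (prods1 G').
      { apply/In_p1. by exists ((s, p), inr (σ, a)). }
      move: Hin; case E: (d σ) => Hin; apply: Der_N1 Hin _; rewrite /= E; exact: Der_S2.
    + have Hs2 : 1 < size [:: (σ, x), a & w'] by [].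
      case: (SplitSym Hw Hs2) => s1 [s2 [x1 [y1 [Ew [Hx1 [Hy1 [W1 [W2 Hinc]]]]]]]].
      have Hin : In ((s, p), tN1 (s1, p) (tN1 (s2, p) tBox)) (prods1 G').
      { apply/In_p1. by exists ((s, p), inl (s1, s2)). }
      rewrite Ew plug_cat. apply: Der_N1 Hin _ => /=.
      have Hsz' : size x1 + size y1 <= m.+1 by rewrite -size_cat -Ew.
      have Hx1s : 0 < size x1 by case: x1 Hx1 {Ew Hsz' W1 Hinc}.
      have Hy1s : 0 < size y1 by case: y1 Hy1 {Ew Hsz' W2 Hinc}.
      apply: (IH) => //; first lia.
      * move=> σ0 x0 Hin0; apply: (Hl σ0); rewrite Ew; apply/In_cat; by left.
      * apply: IH => //; first lia.
        move=> σ0 x0 Hin0; apply: (Hl σ0); rewrite Ew; apply/In_cat; by right.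
Qed.

Lemma PT_tX X : PT (tX X).
Proof. case: X => [[i q]|] /=; [exact: tI_In|exact: HP_N0]. Qed.

Lemma complete n : forall u, tsize u <= n -> nonone u ->
  forall X, Der G (tX X) u -> Der G' (tN0 X) u.
Proof.
  elim: n => [|n IH] u Hsz Hnn X HX.
  - by case: u Hsz {Hnn HX}.
  - case: (spine_dec u) => w [e Eu]. subst u.
    case: (plug_sides Hnn) => He Hw.
    case: e He HX Hsz Hnn Hw => [α|//] _ HX Hsz Hnn Hw.
    case: w HX Hsz Hnn Hw => [|l w] HX Hsz Hnn Hw.
    + have Hin : In (X, tS0 α) (prods0 G') by apply/In_p0; exists (X, α, None).
      apply: Der_N0 Hin _. exists 0; constructor.
    + case: (idx_of (PT_tX X)) => i Hi.
      have Hin : In (X, tN1 (inl (i, Some α), par X) (tS0 α)) (prods0 G').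
      { apply/In_p0. exists (X, α, Some (inl (i, Some α))); split => //=.
        move=> w'; rewrite /Wsym /= Hi. done. }
      apply: Der_N0 Hin _. apply: (C1 (m := size (l :: w))) => //.
      * move=> σ x Hin0 Y HY. have [Hn Hs] := Hw _ _ Hin0.
        apply: IH => //. lia.
      * rewrite /Wsym /= Hi. exact: HX.
      * exists 0; constructor.
Qed.

Theorem main_sec : exists (N0'' N1'' : finType) (G'' : sCFTG N0'' N1'' S0 S2) (d' : S2 -> dir),
    spine_grammar G'' d' /\ normalized G'' /\
    (forall u : ttree S0 S2, lang G'' u <-> lang G u).
Proof.
  exists (N0' : finType), (N1' : finType), G', d.
  split; first exact: G'_spine. split; first exact: G'_normalized.
  move=> u. rewrite lang_Der (lang_Der G). split.
  - case=> h /sound /=. done.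
  - move=> H. apply: (complete (n := tsize (ms u))) => //. exact: nonone_ms.
Qed.
End Main.

Theorem theorem4p5 (N0 N1 S0 S2 : finType) (G : sCFTG N0 N1 S0 S2)
    (d : S2 -> dir) :
  spine_grammar G d ->
  exists (N0' N1' : finType) (G' : sCFTG N0' N1' S0 S2) (d' : S2 -> dir),
    spine_grammar G' d' /\ normalized G' /\
    (forall u : ttree S0 S2, lang G' u <-> lang G u).
Proof. move=> HG. exact: main_sec HG. Qed.
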